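(* Let $G$ be a domino-free bipartite graph with color classes $X,Y$ and no universal vertex, and let $\mathcal{L}(G)=(\mathcal{B}(G)\cup\{\bot,\top\},\preceq)$ be its Galois lattice, with meet $\wedge$ and join $\vee$. Then for any $B^1,B^2\in\mathcal{B}(G)$ that are incomparable under $\preceq$, $$B^1\wedge B^2\neq\bot\ \Rightarrow\ B^1\vee B^2=\top \qquad\text{and}\qquad B^1\vee B^2\neq\top\ \Rightarrow\ B^1\wedge B^2=\bot.$$
   Context: A domino is the graph obtained from the chordless cycle $C_6$ by adding a chord between two antipodal vertices; domino-free means no induced domino. A biclique is a vertex set inducing a complete bipartite subgraph, with shores $X(B)=B\cap X$, $Y(B)=B\cap Y$; $\mathcal{B}(G)$ is the set of inclusion-wise maximal bicliques, ordered by $B\preceq B'\iff X(B)\subseteq X(B')$ (equivalently $Y(B)\supseteq Y(B')$). $\mathcal{L}(G)$ adds a bottom $\bot$ with $X(\bot)=\emptyset$, $Y(\bot)=Y$ and a top $\top$ with $X(\top)=X$, $Y(\top)=\emptyset$; this poset is a lattice. A universal vertex is adjacent to all vertices of the opposite color class. *)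

(* Defs.v *)
From mathcomp Require Import all_boot.
Set Implicit Arguments. Unset Strict Implicit. Unset Printing Implicit Defensive.

Section Bip.
(* A bipartite graph with colour classes X and Y: vertex type X + Y,
   edges only between the classes, given by adj : X -> Y -> bool. *)
Variables (X Y : finType) (adj : X -> Y -> bool).

Definition vert := (X + Y)%type.

Definition gedge (u v : vert) : bool :=
  match u, v with
  | inl x, inr y => adj x y
  | inr y, inl x => adj x y
  | _, _ => false
  end.

(* the domino on 'I_6: the cycle 0-1-2-3-4-5-0 plus the chord 0-3
   between antipodal vertices *)
Definition domino_edge (i j : 'I_6) : bool :=
  [|| (i.+1 %% 6 == j), (j.+1 %% 6 == i),
      (i == 0 :> nat) && (j == 3 :> nat) | (i == 3 :> nat) && (j == 0 :> nat)].

Definition has_induced_domino : Prop :=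
  exists f : 'I_6 -> vert, injective f /\
    forall i j, gedge (f i) (f j) = domino_edge i j.

Definition domino_free : Prop := ~ has_induced_domino.

Definition universal (v : vert) : bool :=
  match v with
  | inl x => [forall y, adj x y]
  | inr y => [forall x, adj x y]
  end.

Definition no_universal_vertex : Prop := forall v : vert, ~~ universal v.

Definition Xs (B : {set vert}) : {set X} := [set x | inl x \in B].
Definition Ys (B : {set vert}) : {set Y} := [set y | inr y \in B].

Definition biclique (B : {set vert}) : Prop :=
  Xs B != set0 /\ Ys B != set0 /\
  forall x y, x \in Xs B -> y \in Ys B -> adj x y.

Definition max_biclique (B : {set vert}) : Prop :=
  biclique B /\ forall B', biclique B' -> B \subset B' -> B' = B.

Inductive lat_elt := Bot | Top | Bic of {set vert}.

Definition in_lattice (a : lat_elt) : Prop :=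
  match a with
  | Bic B => max_biclique B
  | _ => True
  end.

Definition Xsh (a : lat_elt) : {set X} :=
  match a with
  | Bot => set0
  | Top => setT
  | Bic B => Xs B
  end.

Definition lat_le (a b : lat_elt) : bool := Xsh a \subset Xsh b.

Definition is_meet (a b m : lat_elt) : Prop :=
  in_lattice m /\ lat_le m a /\ lat_le m b /\
  forall c, in_lattice c -> lat_le c a -> lat_le c b -> lat_le c m.

Definition is_join (a b j : lat_elt) : Prop :=
  in_lattice j /\ lat_le a j /\ lat_le b j /\
  forall c, in_lattice c -> lat_le a c -> lat_le b c -> lat_le j c.

End Bip.

(* Main.v *)
Require Import Defs.
From mathcomp Require Import all_boot.

Section S.
Variables (X Y : finType) (adj : X -> Y -> bool).

Lemma extX (B : {set vert X Y}) a : max_biclique adj B -> a \notin Xs B ->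
  exists2 y, y \in Ys B & ~~ adj a y.
Proof.
move=> [[nX [nY bc]] mx] aN.
case: (boolP [exists y in Ys B, ~~ adj a y]) => [/exists_inP[y ? ?]|/exists_inPn H].
  by exists y.
have bb : biclique adj (B :|: [set inl a]).
  split; first by apply/set0Pn; exists a; rewrite !inE eqxx orbT.
  split.
    case/set0Pn: nY => y yB; apply/set0Pn; exists y.
    by move: yB; rewrite !inE => ->.
  move=> x y; rewrite !inE => /orP[xB|/eqP[->]] /orP[yB|//].
    by apply: bc; rewrite inE.
  by move: (H y); rewrite inE yB negbK; apply.
have E := mx _ bb (subsetUl _ _).
by move: aN; rewrite inE -E !inE eqxx orbT.
Qed.

Lemma no_both (B1 B2 M J : {set vert X Y}) :
  domino_free adj -> max_biclique adj B1 -> max_biclique adj B2 ->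
  ~~ lat_le (Bic B1) (Bic B2) -> ~~ lat_le (Bic B2) (Bic B1) ->
  max_biclique adj M -> lat_le (Bic M) (Bic B1) -> lat_le (Bic M) (Bic B2) ->
  max_biclique adj J -> lat_le (Bic B1) (Bic J) -> lat_le (Bic B2) (Bic J) -> False.
Proof.
rewrite /lat_le /=.
move=> df mb1 mb2 n12 n21 [[nXM _] _] M1 M2 [[_ [nYJ bcJ]] _] J1 J2.
case/set0Pn: nXM => x0 x0M.
have x01 := subsetP M1 _ x0M; have x02 := subsetP M2 _ x0M.
case/set0Pn: nYJ => y0 y0J.
case/subsetPn: n12 => a a1 a2.
case/subsetPn: n21 => b b2 b1.
have [y2 y22 nay2] := @extX B2 a mb2 a2.
have [y1 y11 nby1] := @extX B1 b mb1 b1.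
case: mb1 => [[_ [_ bc1]] _]; case: mb2 => [[_ [_ bc2]] _].
have e1 : adj x0 y1 by apply: bc1.
have e2 : adj a y1 by apply: bc1.
have e3 : adj a y0 by apply: bcJ => //; apply: (subsetP J1).
have e4 : adj b y0 by apply: bcJ => //; apply: (subsetP J2).
have e5 : adj b y2 by apply: bc2.
have e6 : adj x0 y2 by apply: bc2.
have e7 : adj x0 y0 by apply: bcJ => //; apply: (subsetP J1).
have n1 : adj a y2 = false by apply/negbTE.
have n2 : adj b y1 = false by apply/negbTE.
have xa : x0 != a by apply: contraNneq a2 => <-.
have xb : x0 != b by apply: contraNneq b1 => <-.
have ab : a != b by apply: contraNneq a2 => ->.
have y12 : y1 != y2 by apply: contraNneq nay2 => <-.
have y10 : y1 != y0 by apply: contraNneq nby1 => ->; rewrite e4.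
have y02 : y0 != y2 by apply: contraNneq nay2 => <-.
apply: df.
pose f := fun i : 'I_6 => match val i with
  | 0 => inl x0 | 1 => inr y1 | 2 => inl a | 3 => inr y0 | 4 => inl b
  | _ => inr y2 end : vert X Y.
exists f; split.
  move=> [[|[|[|[|[|[|i]]]]]] Hi] [[|[|[|[|[|[|j]]]]]] Hj] //=;
  rewrite /f /= => //; try (move=> E; apply/val_inj => //=);
  try (by case: E => /eqP; rewrite ?(negbTE xa) ?(negbTE xb) ?(negbTE ab)
      ?(negbTE y12) ?(negbTE y10) ?(negbTE y02) // eq_sym
      ?(negbTE xa) ?(negbTE xb) ?(negbTE ab)
      ?(negbTE y12) ?(negbTE y10) ?(negbTE y02)).
move=> [[|[|[|[|[|[|i]]]]]] Hi] [[|[|[|[|[|[|j]]]]]] Hj] //=;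
  by rewrite /f /domino_edge /= ?e1 ?e2 ?e3 ?e4 ?e5 ?e6 ?e7 ?n1 ?n2.
Qed.

End S.

Theorem lemma1 (X Y : finType) (adj : X -> Y -> bool) :
  domino_free adj -> no_universal_vertex adj ->
  forall B1 B2 : {set vert X Y},
    max_biclique adj B1 -> max_biclique adj B2 ->
    ~~ lat_le (Bic B1) (Bic B2) -> ~~ lat_le (Bic B2) (Bic B1) ->
    forall m j : lat_elt X Y,
      is_meet adj (Bic B1) (Bic B2) m -> is_join adj (Bic B1) (Bic B2) j ->
      (m <> Bot X Y -> j = Top X Y) /\ (j <> Top X Y -> m = Bot X Y).
Proof.
move=> df nu B1 B2 mb1 mb2 n12 n21 m j [im [m1 [m2 _]]] [ij [j1 [j2 _]]].
have mT : m <> Top X Y.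
  move=> E; subst m; move: m1; rewrite /lat_le /=.
  case: mb1 => [[_ [nY bc]] _]; case/set0Pn: nY => y yB.
  move=> /subsetP sub; apply: (negP (nu (inr y))) => /=.
  by apply/forallP => x; apply: bc => //; apply: sub; rewrite inE.
have jB : j <> Bot X Y.
  move=> E; subst j; move: j1; rewrite /lat_le /= subset0 => /eqP E.
  by case: mb1 => [[nX _] _]; rewrite E eqxx in nX.
have H : forall M J, m = Bic M -> j = Bic J -> False.
  move=> M J Em Ej; subst m j.
  exact: (@no_both X Y adj B1 B2 M J df mb1 mb2 n12 n21 im m1 m2 ij j1 j2).
split.
  move=> mnB; case: j jB ij j1 j2 H => // J _ _ _ _ H.
  by case: m mnB mT im m1 m2 H => // M _ _ _ _ _ H; case: (H M J).
move=> jnT; case: m mT im m1 m2 H => // M _ _ _ _ H.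
by case: j jnT jB ij j1 j2 H => // J _ _ _ _ _ H; case: (H M J).
Qed.
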